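(* Let $n\ge 2$, $A\in\mathrm{Mat}_{n\times n}(\mathbb{R})$, $q\in\mathbb{R}^n$ a formal equilibrium of the replicator field $X_A$, $B=-EAE^t$, $\eta_q(u)_i=q_i-\frac{e^{u_i}}{1+\sum_{j}e^{u_j}}$, and $\tilde Y_B(u)=(1+\sum_{i=1}^{n-1}e^{u_i})B\eta_q(u)$ on $\mathbb{R}^{n-1}$. Suppose $D=(d_{ij})\in\mathrm{Mat}_{(n-1)\times(n-1)}(\mathbb{R})$ is such that $DB$ is anti-symmetric and $D^tQ_1$ is diagonal, where $(Q_1)_{ij}=q_i-\delta_{ij}$, and let $H_D(u)=\sum_{i}\big(\sum_k d_{ki}q_k\big)u_i+\sum_i\big(\big(\sum_k d_{ki}q_k\big)-d_{ii}\big)e^{u_i}$. (1) If $B$ is invertible, then $\tilde Y_B$ is Hamiltonian with Hamiltonian $H_D$ with respect to the constant (pre)symplectic structure $\omega^\sharp=D^tB^{-1}$ (i.e. $\omega^\sharp\tilde Y_B=dH_D$); equivalently, the vector field $\frac{1}{x_n}X_A$ restricted to the interior of $\Delta^{n-1}$ is Hamiltonian with Hamiltonian $H_D\circ\phi^{-1}$ with respect to the presymplectic structure $\omega^\sharp=(d\phi^{-1})^tD^tB^{-1}(d\phi^{-1})$. (2) If $D^t$ is invertible, then $\tilde Y_B$ is Hamiltonian with Hamiltonian $H_D$ with respect to the constant Poisson structure $\pi^\sharp=B(D^t)^{-1}$ (i.e. $\tilde Y_B=\pi^\sharp dH_D$); equivalently, $\frac{1}{x_n}X_A$ restricted to the interior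 of $\Delta^{n-1}$ is Hamiltonian with Hamiltonian $H_D\circ\phi^{-1}$ with respect to the Poisson structure $\pi^\sharp=(d\phi)B(D^t)^{-1}(d\phi)^t$.
   Context: $X_A(x)_i=x_i((Ax)_i-x^tAx)$ on $\Delta^{n-1}=\{x\in\mathbb{R}^n_{\ge0}:\sum x_i=1\}$. A formal equilibrium is $q\in\mathbb{R}^n$ with $\sum q_i=1$ and all $(Aq)_i$ equal. $E=[-I_{n-1}\mid\mathbb{1}]$. $\phi:\mathbb{R}^{n-1}\to(\Delta^{n-1})^\circ$, $\phi(u)=\big(\frac{e^{u_1}}{1+\sum_j e^{u_j}},\dots,\frac{e^{u_{n-1}}}{1+\sum_j e^{u_j}},\frac{1}{1+\sum_j e^{u_j}}\big)$, a diffeomorphism with $\phi^{-1}(x)=(\log(x_i/x_n))_{i\le n-1}$; $d\phi$, $d\phi^{-1}$ denote Jacobians, and the structures on $(\Delta^{n-1})^\circ$ in the ''equivalently'' parts are the transports of the constant structures on $\mathbb{R}^{n-1}$ via $\phi$. For a 2-form $\omega$, $\omega^\sharp X=\omega(X,\cdot)$ and $X$ is Hamiltonian with Hamiltonian $H$ if $\omega^\sharp X=dH$; for a Poisson bivector $\pi$, $\pi^\sharp\alpha=\pi(\alpha,\cdot)$ and the Hamiltonian field of $H$ is $\pi^\sharp dH$. *)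

(* Defs.v *)
From HB Require Import structures.
From mathcomp Require Import all_boot all_order all_algebra.
From mathcomp Require Import all_classical all_reals all_analysis.
Set Implicit Arguments. Unset Strict Implicit. Unset Printing Implicit Defensive.
Import Order.TTheory GRing.Theory Num.Theory.
Import numFieldNormedType.Exports.
Local Open Scope ring_scope.

(* Convention: n = m.+1 (so n >= 2 iff 1 <= m).  Points of R^k are row
   vectors 'rV[R]_k (the normed spaces on which MathComp-Analysis derivatives
   live); matrices act on column vectors, i.e. on transposes. *)

Section Defs.
Variables (R : realType) (m : nat).

Definition replicator (A : 'M[R]_m.+1) (x : 'rV[R]_m.+1) : 'rV[R]_m.+1 :=
  \row_i (x 0 i * ((A *m x^T) i 0 - (x *m A *m x^T) 0 0)).

Definition formal_equilibrium (A : 'M[R]_m.+1) (q : 'rV[R]_m.+1) : Prop :=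
  \sum_i q 0 i = 1 /\ exists c : R, forall i, (A *m q^T) i 0 = c.

Definition Emx : 'M[R]_(m, m.+1) :=
  \matrix_(i, j) (if j == widen_ord (leqnSn m) i then -1
                  else if j == ord_max then 1 else 0).

Definition Bmx (A : 'M[R]_m.+1) : 'M[R]_m := - (Emx *m A *m Emx^T).

Definition sumexp (u : 'rV[R]_m) : R := 1 + \sum_j expR (u 0 j).

Definition eta_q (q : 'rV[R]_m.+1) (u : 'rV[R]_m) : 'rV[R]_m :=
  \row_i (q 0 (widen_ord (leqnSn m) i) - expR (u 0 i) / sumexp u).

Definition Ytilde (A : 'M[R]_m.+1) (q : 'rV[R]_m.+1) (u : 'rV[R]_m)
  : 'rV[R]_m := (sumexp u *: (Bmx A *m (eta_q q u)^T))^T.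

Definition Q1 (q : 'rV[R]_m.+1) : 'M[R]_m :=
  \matrix_(i, j) (q 0 (widen_ord (leqnSn m) i) - (i == j)%:R).

Definition antisym_mx (M : 'M[R]_m) : Prop := M^T = - M.

Definition cD (D : 'M[R]_m) (q : 'rV[R]_m.+1) (i : 'I_m) : R :=
  \sum_k D k i * q 0 (widen_ord (leqnSn m) k).

Definition H_D (D : 'M[R]_m) (q : 'rV[R]_m.+1) (u : 'rV[R]_m) : R :=
  \sum_i cD D q i * u 0 i + \sum_i (cD D q i - D i i) * expR (u 0 i).

Definition phi (u : 'rV[R]_m) : 'rV[R]_m.+1 :=
  \row_j ((if unlift ord_max j is Some i then expR (u 0 i) else 1) / sumexp u).

Definition phiinv (x : 'rV[R]_m.+1) : 'rV[R]_m :=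
  \row_i ln (x 0 (widen_ord (leqnSn m) i) / x 0 ord_max).

Definition simplex_interior (x : 'rV[R]_m.+1) : Prop :=
  (forall i, 0 < x 0 i) /\ \sum_i x 0 i = 1.

Definition tangent (v : 'rV[R]_m.+1) : Prop := \sum_i v 0 i = 0.

End Defs.

Definition grad (R : realType) (k : nat) (H : 'rV[R]_k -> R) (u : 'rV[R]_k)
  : 'cV[R]_k := \col_i ('d H u (delta_mx 0 i)).

(* The usual Jacobian matrix df(p) (rows = output coordinates); the library's
   [jacobian] is its transpose (it acts on row vectors). *)
Definition Jac (R : realType) (k l : nat) (f : 'rV[R]_k -> 'rV[R]_l)
  (p : 'rV[R]_k) : 'M[R]_(l, k) := (jacobian f p)^T.

(* Main.v *)
Require Import Defs.
From HB Require Import structures.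
From mathcomp Require Import all_boot all_order all_algebra.
From mathcomp Require Import all_classical all_reals all_analysis.
From mathcomp Require Import ring lra.
Import Order.TTheory GRing.Theory Num.Theory.
Import numFieldNormedType.Exports.
Local Open Scope ring_scope.
Set Implicit Arguments. Unset Strict Implicit.


Section Tool.
Context {R : realType} {k : nat}.
Notation V := 'rV[R]_k.

Definition HD (f : V -> R) (x : V) (L : V -> R) :=
  differentiable f x /\ forall v, 'd f x v = L v.

Lemma HD_ext {f g x L L'} : (forall z, f z = g z) -> (forall v, L v = L' v) ->
  HD f x L -> HD g x L'.
Proof.
move=> fg LL; have -> : g = f by apply/funext=> z; rewrite fg.
by case=> d h; split=> // v; rewrite h LL.
Qed.

Lemma HD_coord i x : HD (fun z : V => z 0 i) x (fun v => v 0 i).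
Proof.
have d := @differentiable_coord R 1 k x 0 i.
split=> // v; rewrite -deriveE //.
have := derive_mx (@derivable_id _ _ x v).
rewrite derive_id => /(congr1 (fun M : 'rV[R]_k => M 0 i)) => ->.
by rewrite mxE.
Qed.

Lemma HD_cst c x : HD (fun _ => c) x (fun _ => 0).
Proof. split; first exact: differentiable_cst. by move=> v; rewrite diff_cst. Qed.

Lemma HD_add f g x L M : HD f x L -> HD g x M ->
  HD (fun z => f z + g z) x (fun v => L v + M v).
Proof.
move=> [df hf] [dg hg]; split; first exact: differentiableD.
by move=> v; rewrite (diffD df dg) /= hf hg.
Qed.

Lemma HD_mul f g x L M : HD f x L -> HD g x M ->
  HD (fun z => f z * g z) x (fun v => f x * M v + g x * L v).
Proof.
move=> [df hf] [dg hg]; split; first exact: differentiableM.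
move=> v; rewrite (diffM df dg); transitivity (f x * 'd g x v + g x * 'd f x v); first by [].
by rewrite hf hg.
Qed.

Lemma HD_inv f x L : HD f x L -> f x != 0 ->
  HD (fun z => (f z)^-1) x (fun v => - (f x)^-2 * L v).
Proof.
move=> [df hf] fx0; split; first exact: differentiableV.
by move=> v; rewrite (diffV df fx0) /= hf.
Qed.

Lemma HD_comp1 (g : R -> R) g' f x L : derivable g (f x) 1 -> 'D_1 g (f x) = g' ->
  HD f x L -> HD (fun z => g (f z)) x (fun v => L v * g').
Proof.
move=> dg dgv [df hf].
have dg' : differentiable g (f x) by apply/derivable1_diffP.
split; first exact: (differentiable_comp df dg').
move=> v; rewrite (diff_comp df dg') /= deriv1E // derive1E dgv hf.
by [].
Qed.

Lemma HD_sum (I : Type) (r : seq I) (F : I -> V -> R) LF x :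
  (forall i, HD (F i) x (LF i)) ->
  HD (fun z => \sum_(i <- r) F i z) x (fun v => \sum_(i <- r) LF i v).
Proof.
move=> h; elim: r => [|a r IH].
  have := HD_cst (0:R) x. apply: HD_ext => *; by rewrite big_nil.
have := HD_add (h a) IH; apply: HD_ext => *; by rewrite big_cons.
Qed.

End Tool.

Section Tool2.
Context {R : realType} {k : nat}.
Notation V := 'rV[R]_k.

Lemma HDv l (f : V -> 'rV[R]_l) x (Lv : V -> 'rV[R]_l) :
  (forall j, HD (fun z => f z 0 j) x (fun v => Lv v 0 j)) ->
  differentiable f x /\ forall v, 'd f x v = Lv v.
Proof.
move=> h.
have df : differentiable f x.
  have -> : f = \sum_(j < l) (fun z => f z 0 j *: (delta_mx 0 j : 'rV[R]_l)).
    by apply/funext => z; rewrite fct_sumE; exact: row_sum_delta.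
  apply: differentiable_sum => j; apply: differentiableZl; exact: (h j).1.
split=> // v; rewrite -deriveE // derive_mx; last exact: diff_derivable.
apply/rowP => j; rewrite mxE deriveE; [exact: (h j).2 | exact: (h j).1].
Qed.

Lemma lin_expand (L : {linear V -> R}) z : L z = \sum_i z 0 i * L (delta_mx 0 i).
Proof.
rewrite {1}(row_sum_delta z) linear_sum; apply: eq_bigr => i _.
by rewrite linearZ.
Qed.

Lemma mysum_delta (a : 'I_k) (F : 'I_k -> R) : \sum_j (delta_mx 0 a : V) 0 j * F j = F a.
Proof.
rewrite (bigD1 a) //= mxE !eqxx /= mul1r big1 ?addr0 // => j /negPf ja.
by rewrite mxE ja andbF mul0r.
Qed.

Lemma mysum_eq (a : 'I_k) (F : 'I_k -> R) : \sum_j (j == a)%:R * F j = F a.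
Proof.
rewrite (bigD1 a) //= eqxx mul1r big1 ?addr0 // => j /negPf ->.
by rewrite mul0r.
Qed.

Lemma mysum_eqr (a : 'I_k) (F : 'I_k -> R) : \sum_j F j * (j == a)%:R = F a.
Proof.
rewrite (bigD1 a) //= eqxx mulr1 big1 ?addr0 // => j /negPf ->.
by rewrite mulr0.
Qed.

End Tool2.



Section Main.
Context {R : realType} {m : nat}.
Local Notation w i := (widen_ord (leqnSn m) i).

Definition gH (D : 'M[R]_m) (q : 'rV[R]_m.+1) (u : 'rV[R]_m) (i : 'I_m) : R :=
  cD D q i + (cD D q i - D i i) * expR (u 0 i).

Lemma HD_H (D : 'M[R]_m) q u : HD (H_D D q) u (fun v => \sum_i v 0 i * gH D q u i).
Proof.
have h1 : HD (fun z : 'rV[R]_m => \sum_i cD D q i * z 0 i) u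
              (fun v => \sum_i v 0 i * cD D q i).
  apply: HD_sum => i; have := HD_mul (HD_cst (cD D q i) u) (HD_coord i u).
  by apply: HD_ext => // v; rewrite mulr0 addr0 mulrC.
have h2 : HD (fun z : 'rV[R]_m => \sum_i (cD D q i - D i i) * expR (z 0 i)) u
              (fun v => \sum_i v 0 i * ((cD D q i - D i i) * expR (u 0 i))).
  apply: HD_sum => i.
  have := HD_mul (HD_cst (cD D q i - D i i) u)
    (HD_comp1 (@derivable_expR R (u 0 i)) (congr1 (fun f => f (u 0 i)) (derive_expR R)) (HD_coord i u)).
  by apply: HD_ext => // v; rewrite mulr0 addr0 /= mulrCA.
have := HD_add h1 h2; apply: HD_ext => // v.
by rewrite -big_split /=; apply: eq_bigr => i _; rewrite /gH mulrDr.
Qed.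

Lemma grad_H (D : 'M[R]_m) q u : grad (H_D D q) u = \col_i gH D q u i.
Proof.
apply/colP => i; rewrite !mxE (HD_H D q u).2; exact: mysum_delta.
Qed.

Lemma grad_H_alg (D : 'M[R]_m) (q : 'rV[R]_m.+1) (u : 'rV[R]_m) : is_diag_mx (D^T *m Q1 q) ->
  grad (H_D D q) u = sumexp u *: (D^T *m (eta_q q u)^T).
Proof.
move=> /is_diag_mxP hd; rewrite grad_H; apply/colP => i; rewrite !mxE.
have S0 : sumexp u != 0.
  rewrite /sumexp; apply: lt0r_neq0; apply: ltr_pwDl => //.
  by apply: sumr_ge0 => j _; exact: expR_ge0.
have hc : forall j, j != i -> D j i = cD D q i.
  move=> j ji; have e : (D^T *m Q1 q) i j = cD D q i - D j i.
    rewrite mxE /cD -(mysum_eqr j (fun l => D l i)) -sumrB.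
    by apply: eq_bigr => l _; rewrite !mxE; ring.
  by move: (hd i j); rewrite e eq_sym => /(_ ji) /eqP; rewrite subr_eq0 => /eqP.
rewrite mulr_sumr; symmetry.
transitivity (\sum_j (sumexp u * (D j i * q 0 (w j)) - D j i * expR (u 0 j))).
  by apply: eq_bigr => j _; rewrite !mxE; field.
rewrite sumrB -mulr_sumr -/(cD D q i) /sumexp mulrDl mul1r mulr_suml -addrA; congr (_ + _).
rewrite -sumrB (bigD1 i) //= big1 ?addr0; first by rewrite /gH; ring.
by move=> j ji; rewrite hc //; ring.
Qed.

End Main.



Section Main2.
Context {R : realType} {m : nat}.
Local Notation w i := (widen_ord (leqnSn m) i).

Lemma w_eq (a b : 'I_m) : (w a == w b) = (a == b).
Proof. by apply/eqP/eqP => [h|->//]; apply/val_inj; move/(congr1 val): h. Qed.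

Lemma max_w (a : 'I_m) : (ord_max == w a) = false.
Proof. by apply/negbTE; rewrite -val_eqE /= neq_ltn ltn_ord orbT. Qed.

Lemma w_max (a : 'I_m) : (w a == ord_max) = false.
Proof. by rewrite eq_sym max_w. Qed.

Lemma lift_w (a : 'I_m) : lift ord_max a = w a.
Proof. apply: val_inj; exact: (lift_max a). Qed.

Lemma unlift_w (a : 'I_m) : unlift ord_max (w a) = Some a.
Proof. by rewrite -lift_w liftK. Qed.

Lemma HD_sumexp (u : 'rV[R]_m) :
  HD (@sumexp R m) u (fun v => 0 + \sum_l v 0 l * expR (u 0 l)).
Proof.
apply: HD_add (HD_cst 1 u) _.
apply: HD_sum => l.
exact: (HD_comp1 (@derivable_expR R (u 0 l)) (congr1 (fun f => f (u 0 l)) (derive_expR R)) (HD_coord l u)).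
Qed.

Lemma sumexp_gt0 (u : 'rV[R]_m) : 0 < sumexp u.
Proof.
rewrite /sumexp; apply: ltr_pwDl => //.
by apply: sumr_ge0 => j _; exact: expR_ge0.
Qed.

Definition Lphi (u v : 'rV[R]_m) : 'rV[R]_m.+1 :=
  \row_j ((if unlift ord_max j is Some i then v 0 i * expR (u 0 i) else 0) / sumexp u
          - phi u 0 j * (\sum_l v 0 l * expR (u 0 l)) / sumexp u).

Lemma d_phi (u : 'rV[R]_m) :
  differentiable (@phi R m) u /\ forall v, 'd (@phi R m) u v = Lphi u v.
Proof.
apply: HDv => j.
have S0 : sumexp u != 0 by apply: lt0r_neq0; exact: sumexp_gt0.
have hS := HD_inv (HD_sumexp u) S0.
case E: (unlift ord_max j) => [i|].
- have he := HD_comp1 (@derivable_expR R (u 0 i)) (congr1 (fun f => f (u 0 i)) (derive_expR R)) (HD_coord i u).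
  have := HD_mul he hS; apply: HD_ext => [z|v]; first by rewrite mxE E.
  by rewrite mxE E /= mxE E; field.
- have := HD_mul (HD_cst 1 u) hS; apply: HD_ext => [z|v]; first by rewrite mxE E.
  by rewrite mxE E /= mxE E; field.
Qed.

Definition Lx (x v : 'rV[R]_m.+1) : 'rV[R]_m :=
  \row_i (v 0 (w i) / x 0 (w i) - v 0 ord_max / x 0 ord_max).

Lemma d_phiinv (x : 'rV[R]_m.+1) : (forall i, 0 < x 0 i) ->
  differentiable (@phiinv R m) x /\ forall v, 'd (@phiinv R m) x v = Lx x v.
Proof.
move=> xp; apply: HDv => i.
have n0 : x 0 ord_max != 0 by apply: lt0r_neq0.
have n1 : x 0 (w i) != 0 by apply: lt0r_neq0.
have hf := HD_mul (HD_coord (w i) x) (HD_inv (HD_coord ord_max x) n0).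
have pos : 0 < x 0 (w i) * (x 0 ord_max)^-1 by rewrite divr_gt0.
have [d1 d2] := is_derive1_ln pos.
have := HD_comp1 d1 d2 hf.
apply: HD_ext => [z|v]; rewrite !mxE //=.
by rewrite expr2 invfM; field; rewrite n0 n1.
Qed.

Lemma Emx_w (i l : 'I_m) : (@Emx R m) i (w l) = - (l == i)%:R.
Proof. by rewrite mxE w_eq w_max; case: eqP => _ /=; rewrite ?oppr0. Qed.

Lemma Emx_max (i : 'I_m) : (@Emx R m) i ord_max = 1.
Proof. by rewrite mxE max_w eqxx. Qed.

Lemma E_mul (y : 'cV[R]_m.+1) (i : 'I_m) : (@Emx R m *m y) i 0 = y ord_max 0 - y (w i) 0.
Proof.
rewrite mxE big_ord_recr /= Emx_max mul1r.
rewrite (eq_bigr (fun l => - ((l == i)%:R * y (w l) 0))); last first.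
  by move=> l _; rewrite Emx_w mulNr.
by rewrite sumrN (mysum_eq i (fun l => y (w l) 0)) addrC.
Qed.

Lemma ord_case (k : 'I_m.+1) : k = ord_max \/ exists j : 'I_m, k = w j.
Proof.
case: (unliftP ord_max k) => [j ->|->]; last by left.
by right; exists j; exact: lift_w.
Qed.

Lemma ET_w (z : 'cV[R]_m) j : ((@Emx R m)^T *m z) (w j) 0 = - z j 0.
Proof.
rewrite mxE (eq_bigr (fun l => - ((l == j)%:R * z l 0))); last first.
  by move=> l _; rewrite mxE Emx_w mulNr eq_sym.
by rewrite sumrN (mysum_eq j (fun l => z l 0)).
Qed.

Lemma ET_max (z : 'cV[R]_m) : ((@Emx R m)^T *m z) ord_max 0 = \sum_j z j 0.
Proof.
rewrite mxE; apply: eq_bigr => l _.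
by rewrite mxE Emx_max mul1r.
Qed.

Lemma exp_phiinv (x : 'rV[R]_m.+1) : (forall i, 0 < x 0 i) ->
  forall i, expR (phiinv x 0 i) = x 0 (w i) / x 0 ord_max.
Proof. by move=> xp i; rewrite mxE lnK // posrE divr_gt0. Qed.

Lemma sum_x (x : 'rV[R]_m.+1) : \sum_k x 0 k = 1 ->
  \sum_i x 0 (w i) = 1 - x 0 ord_max.
Proof. by rewrite big_ord_recr /= => <-; ring. Qed.

Lemma sumexp_phiinv (x : 'rV[R]_m.+1) : (forall i, 0 < x 0 i) ->
  \sum_k x 0 k = 1 -> sumexp (phiinv x) = (x 0 ord_max)^-1.
Proof.
move=> xp hs; have n0 : x 0 ord_max != 0 by apply: lt0r_neq0.
rewrite /sumexp (eq_bigr (fun i => x 0 (w i) / x 0 ord_max)); last first.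
  by move=> i _; rewrite exp_phiinv.
by rewrite -mulr_suml sum_x //; field.
Qed.

Lemma eta_phiinv (q x : 'rV[R]_m.+1) : (forall i, 0 < x 0 i) ->
  \sum_k x 0 k = 1 -> forall i, eta_q q (phiinv x) 0 i = q 0 (w i) - x 0 (w i).
Proof.
move=> xp hs i; have n0 : x 0 ord_max != 0 by apply: lt0r_neq0.
by rewrite mxE exp_phiinv // sumexp_phiinv //; field.
Qed.

Lemma Y_formula (A : 'M[R]_m.+1) (q x : 'rV[R]_m.+1) :
  formal_equilibrium A q -> (forall i, 0 < x 0 i) -> \sum_k x 0 k = 1 ->
  Ytilde A q (phiinv x) =
  \row_i ((x 0 ord_max)^-1 * ((A *m x^T) (w i) 0 - (A *m x^T) ord_max 0)).
Proof.
move=> [hq1 [c hc]] xp hs.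
have e : (@Emx R m)^T *m (eta_q q (phiinv x))^T = x^T - q^T.
  apply/colP => k; case: (ord_case k) => [->|[j ->]]; last first.
    by rewrite ET_w mxE eta_phiinv // !mxE; ring.
  rewrite ET_max !mxE (eq_bigr (fun j => q 0 (w j) - x 0 (w j))); last first.
    by move=> j _; rewrite mxE eta_phiinv.
  by rewrite sumrB sum_x // sum_x //; ring.
have e2 : Bmx A *m (eta_q q (phiinv x))^T = - (@Emx R m *m (A *m x^T)).
  rewrite /Bmx mulNmx -!mulmxA e mulmxBr mulmxBr.
  have -> : @Emx R m *m (A *m q^T) = 0.
    by apply/colP => j; rewrite E_mul !hc [RHS]mxE subrr.
  by rewrite subr0.
apply/rowP => i; rewrite /Ytilde mxE mxE e2 mxE E_mul sumexp_phiinv // [RHS]mxE.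
ring.
Qed.

End Main2.



Section Main3.
Context {R : realType} {m : nat}.
Local Notation w i := (widen_ord (leqnSn m) i).
Variable x : 'rV[R]_m.+1.
Hypothesis xp : forall i, 0 < x 0 i.
Hypothesis hs : \sum_k x 0 k = 1.
Let n0 : x 0 ord_max != 0. Proof. exact: lt0r_neq0. Qed.
Let nw i : x 0 (w i) != 0. Proof. exact: lt0r_neq0. Qed.

Lemma phi_w l : phi (phiinv x) 0 (w l) = x 0 (w l).
Proof. by rewrite mxE unlift_w exp_phiinv // sumexp_phiinv //; field. Qed.

Lemma phi_max : phi (phiinv x) 0 ord_max = x 0 ord_max.
Proof. by rewrite mxE unlift_none sumexp_phiinv //; field. Qed.

Lemma Lphi_w v l : Lphi (phiinv x) v 0 (w l) =
  v 0 l * x 0 (w l) - x 0 (w l) * x 0 ord_max * \sum_i v 0 i * expR (phiinv x 0 i).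
Proof.
by rewrite mxE unlift_w exp_phiinv // phi_w sumexp_phiinv //; field.
Qed.

Lemma Lphi_max v : Lphi (phiinv x) v 0 ord_max =
  - x 0 ord_max * x 0 ord_max * \sum_i v 0 i * expR (phiinv x 0 i).
Proof.
by rewrite mxE unlift_none phi_max sumexp_phiinv //; field.
Qed.

Lemma LxLphi v : Lx x (Lphi (phiinv x) v) = v.
Proof.
by apply/rowP => i; rewrite mxE Lphi_w Lphi_max; field; rewrite n0 nw.
Qed.

Lemma JY_alg (a : 'cV[R]_m.+1) :
  Lphi (phiinv x) (\row_i ((x 0 ord_max)^-1 * (a (w i) 0 - a ord_max 0))) =
  \row_j ((x 0 ord_max)^-1 * (x 0 j * (a j 0 -
       (\sum_i x 0 (w i) * a (w i) 0 + x 0 ord_max * a ord_max 0)))).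
Proof.
have hsum : \sum_i (\row_i ((x 0 ord_max)^-1 * (a (w i) 0 - a ord_max 0))) 0 i
      * expR (phiinv x 0 i) =
   (x 0 ord_max)^-2 * (\sum_i x 0 (w i) * a (w i) 0 - (1 - x 0 ord_max) * a ord_max 0).
  rewrite (eq_bigr (fun i => (x 0 ord_max)^-2 * (x 0 (w i) * a (w i) 0 - x 0 (w i) * a ord_max 0))); last first.
    by move=> i _; rewrite mxE exp_phiinv //; field.
  by rewrite -mulr_sumr sumrB -mulr_suml sum_x.
apply/rowP => j; case: (ord_case j) => [->|[l ->]].
  by rewrite Lphi_max hsum [RHS]mxE; field.
by rewrite Lphi_w hsum [RHS]mxE [in LHS]mxE; field.
Qed.

Lemma xAx (A : 'M[R]_m.+1) : (x *m A *m x^T) 0 0 =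
  \sum_i x 0 (w i) * (A *m x^T) (w i) 0 + x 0 ord_max * (A *m x^T) ord_max 0.
Proof. by rewrite -mulmxA mxE big_ord_recr. Qed.

Lemma Xn_formula (A : 'M[R]_m.+1) :
  ((x 0 ord_max)^-1 *: (replicator A x)^T)^T =
  \row_j ((x 0 ord_max)^-1 * (x 0 j * ((A *m x^T) j 0 -
       (\sum_i x 0 (w i) * (A *m x^T) (w i) 0 + x 0 ord_max * (A *m x^T) ord_max 0)))).
Proof.
apply/rowP => j; rewrite mxE mxE mxE /replicator mxE -xAx.
by rewrite [in LHS]mxE.
Qed.

End Main3.


Unset Implicit Arguments. Set Strict Implicit.

Theorem corollary4p7 (R : realType) (m : nat) (hm : (1 <= m)%N)
  (A : 'M[R]_m.+1) (q : 'rV[R]_m.+1) (hq : formal_equilibrium A q)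
  (D : 'M[R]_m)
  (hDB : antisym_mx (D *m Bmx A))
  (hDQ : is_diag_mx (D^T *m Q1 q)) :
  let B := Bmx A in
  let H := H_D D q in
  let Y := Ytilde A q in
  (* (1) presymplectic structure omega^# = D^t B^{-1} *)
  (B \in unitmx ->
     (forall u : 'rV[R]_m,
        differentiable H u /\ D^T *m invmx B *m (Y u)^T = grad H u)
     /\
     (forall x : 'rV[R]_m.+1, simplex_interior x ->
        let Jinv := Jac (@phiinv R m) x in
        let omega := Jinv^T *m D^T *m invmx B *m Jinv in
        let Xn := (x 0 ord_max)^-1 *: (replicator A x)^T in
        differentiable (H \o @phiinv R m) x /\
        forall v : 'rV[R]_m.+1, tangent v ->
          'd (H \o @phiinv R m) x v = \sum_j (omega *m Xn) j 0 * v 0 j))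
  /\
  (* (2) Poisson structure pi^# = B (D^t)^{-1} *)
  (D^T \in unitmx ->
     (forall u : 'rV[R]_m,
        differentiable H u /\ (Y u)^T = B *m invmx D^T *m grad H u)
     /\
     (forall x : 'rV[R]_m.+1, simplex_interior x ->
        let J := Jac (@phi R m) (phiinv x) in
        let pi := J *m B *m invmx D^T *m J^T in
        differentiable (H \o @phiinv R m) x /\
        (x 0 ord_max)^-1 *: (replicator A x)^T
          = pi *m grad (H \o @phiinv R m) x)).
Proof.
move=> B H Y; rewrite {}/B {}/H {}/Y.
have hY1 : forall u, Bmx A \in unitmx ->
    D^T *m invmx (Bmx A) *m (Ytilde A q u)^T = grad (H_D D q) u.
  move=> u Bu; rewrite /Ytilde trmxK grad_H_alg // -scalemxAr; congr (_ *: _).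
  by rewrite -mulmxA (mulmxA (invmx _)) mulVmx // mul1mx.
have hY2 : forall u, D^T \in unitmx ->
    (Ytilde A q u)^T = Bmx A *m invmx D^T *m grad (H_D D q) u.
  move=> u Du; rewrite /Ytilde trmxK grad_H_alg // -scalemxAr; congr (_ *: _).
  by rewrite -mulmxA (mulmxA (invmx _)) mulVmx // mul1mx.
have dHu : forall u, differentiable (H_D D q) u by move=> u; exact: (HD_H D q u).1.
have simp : forall x : 'rV[R]_m.+1, simplex_interior x ->
  [/\ differentiable (H_D D q \o @phiinv R m) x,
      grad (H_D D q \o @phiinv R m) x = (Jac (@phiinv R m) x)^T *m grad (H_D D q) (phiinv x),
      forall v, 'd (H_D D q \o @phiinv R m) x v =
         (v *m ((Jac (@phiinv R m) x)^T *m grad (H_D D q) (phiinv x))) 0 0,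
      Jac (@phiinv R m) x *m ((x 0 ord_max)^-1 *: (replicator A x)^T) = (Ytilde A q (phiinv x))^T
    & Jac (@phi R m) (phiinv x) *m (Ytilde A q (phiinv x))^T = (x 0 ord_max)^-1 *: (replicator A x)^T /\
      (Jac (@phi R m) (phiinv x))^T *m (Jac (@phiinv R m) x)^T = 1%:M].
  move=> x [xp hs].
  have [dpi hpi] := d_phiinv xp.
  have [dph hph] := d_phi (phiinv x).
  have dF := differentiable_comp dpi (dHu (phiinv x)).
  have dFv : forall v, 'd (H_D D q \o @phiinv R m) x v =
         (v *m ((Jac (@phiinv R m) x)^T *m grad (H_D D q) (phiinv x))) 0 0.
    move=> v; rewrite diff_comp // /= (HD_H D q (phiinv x)).2.
    rewrite /Jac trmxK /jacobian mulmxA mul_rV_lin1 grad_H mxE.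
    by apply: eq_bigr => i _; rewrite mxE.
  split=> //.
  - apply/colP => k; rewrite mxE dFv mxE.
    exact: (mysum_delta k (fun j => ((Jac (@phiinv R m) x)^T *m grad (H_D D q) (phiinv x)) j 0)).
  - apply: (can_inj (@trmxK _ _ _)); rewrite trmx_mul trmxK /jacobian mul_rV_lin1 hpi.
    rewrite Y_formula // Xn_formula //; apply/rowP => i; rewrite !mxE.
    by field; rewrite !lt0r_neq0.
  split.
  - apply: (can_inj (@trmxK _ _ _)); rewrite trmx_mul !trmxK /jacobian mul_rV_lin1 hph.
    by rewrite Y_formula // JY_alg // Xn_formula.
  - rewrite /Jac !trmxK; apply/row_matrixP => l.
    by rewrite !rowE mulmxA !mul_rV_lin1 hph hpi LxLphi // mulmx1.
split=> hU; split.
- by move=> u; split; [exact: dHu | exact: hY1].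
- move=> x hx; have [dF gF dFv JX [JY JJ]] := simp x hx.
  split=> // v _; rewrite dFv mxE; symmetry.
  rewrite -!mulmxA JX (mulmxA D^T) hY1 //.
  by apply: eq_bigr => j _; rewrite mulrC.
- by move=> u; split; [exact: dHu | exact: hY2].
- move=> x hx; have [dF gF dFv JX [JY JJ]] := simp x hx.
  split=> //; rewrite gF -!mulmxA (mulmxA ((Jac (@phi R m) (phiinv x))^T)) JJ mul1mx.
  by rewrite (mulmxA (Bmx A)) -hY2 // JY.
Qed.
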